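(* There is a constant $c_1>0$ such that for all sufficiently large $n$, $$h_3(n,4,1) > c_1\left(\frac{\log n}{\log\log n}\right)^{1/2}.$$ Equivalently, every $n$-vertex $3$-graph in which no four vertices span exactly one edge has a clique or coclique of size greater than $c_1(\log n/\log\log n)^{1/2}$.
   Context: For an $r$-uniform hypergraph ($r$-graph) $H$, a homogeneous set is a set of vertices that is either a clique (every $r$-subset is an edge) or a coclique (no $r$-subset is an edge); $h(H)$ denotes the size of a largest homogeneous set. An $(m,f)$-graph is an $r$-graph with $m$ vertices and $f$ edges; $H$ is $(m,f)$-free if it contains no induced sub-hypergraph that is an $(m,f)$-graph. For a set $Q$ of pairs $(m,f)$, $H$ is $Q$-free if it is $(m,f)$-free for every $(m,f)\in Q$. $h_r(n,Q)$ is the minimum of $h(H)$ over all $n$-vertex $Q$-free $r$-graphs $H$, and $h_r(n,m,f)=h_r(n,\{(m,f)\})$. *)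

(* Defs.v *)
From mathcomp Require Import all_boot.
From Stdlib Require Import Reals.
Set Implicit Arguments. Unset Strict Implicit. Unset Printing Implicit Defensive.

Definition uniform_hypergraph (r n : nat) (E : {set {set 'I_n}}) : Prop :=
  forall e, e \in E -> #|e| = r.

Definition is_clique (r n : nat) (E : {set {set 'I_n}}) (A : {set 'I_n}) : Prop :=
  forall e : {set 'I_n}, e \subset A -> #|e| = r -> e \in E.

Definition is_coclique (r n : nat) (E : {set {set 'I_n}}) (A : {set 'I_n}) : Prop :=
  forall e : {set 'I_n}, e \subset A -> #|e| = r -> e \notin E.

Definition is_homogeneous (r n : nat) (E : {set {set 'I_n}}) (A : {set 'I_n}) : Prop :=
  is_clique r E A \/ is_coclique r E A.

Definition induced_edges (n : nat) (E : {set {set 'I_n}}) (S : {set 'I_n}) : nat :=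
  #|[set e in E | e \subset S]|.

Definition mf_free (n m f : nat) (E : {set {set 'I_n}}) : Prop :=
  forall S : {set 'I_n}, #|S| = m -> induced_edges E S <> f.

(* Main.v *)
Require Import Defs.
From mathcomp Require Import all_boot.
From Stdlib Require Import Reals.
From mathcomp Require Import zify.
Set Implicit Arguments. Unset Strict Implicit. Unset Printing Implicit Defensive.

Section Col.
Variable j : nat.

Definition P_ok (col : nat -> nat -> bool) :=
  forall i a b, i < a -> a < b -> b < j -> col i a = false -> col i b = col a b.

Definition par (col : nat -> nat -> bool) i :=
  i.+1 + find (fun a => ~~ col i a) (iota i.+1 (j - i.+1)).

Lemma par_props col i : i < j ->
  [/\ i < par col i <= j, (par col i < j -> col i (par col i) = false)
    & (forall c, i < c < par col i -> col i c = true)].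
Proof.
move=> ij; rewrite /par.
set s := iota _ _; set f := find _ s.
have fs : f <= size s := find_size _ _.
have ss : size s = j - i.+1 by rewrite size_iota.
split.
- apply/andP; split; lia.
- move=> lt; have hf : f < size s by lia.
  have hh : has (fun a => ~~ col i a) s by rewrite has_find.
  have := nth_find 0 hh; rewrite -/f /s nth_iota; last by lia.
  by move/negbTE.
- move=> c /andP [ic cf].
  have := before_find 0 (a := fun a => ~~ col i a) (s := s) (i := c - i.+1).
  rewrite -/f; have -> : c - i.+1 < f by lia.
  move/(_ isT); rewrite /s nth_iota; last by lia.
  have -> : i.+1 + (c - i.+1) = c by lia.
  by move/negbFE.
Qed.

Lemma par_inj col col' : P_ok col -> P_ok col' ->
  (forall i, i < j -> par col i = par col' i) ->
  forall i a, i < a -> a < j -> col i a = col' i a.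
Proof.
move=> Pc Pc' hp i a; move: {2}(a - i) (leqnn (a - i)) => k.
elim: k i a => [|k IH] i a hk ia aj; first by lia.
have ij : i < j by lia.
have [h1 h2 h3] := par_props col ij.
have [h1' h2' h3'] := par_props col' ij.
rewrite -hp // in h1' h2' h3'.
set b := par col i in h1 h2 h3 h1' h2' h3'.
case: (ltngtP a b) => ab.
- by rewrite h3 ?h3' // ia.
- have bj : b < j by lia.
  have ib : i < b by lia.
  rewrite (Pc i b a ib ab aj (h2 bj)) (Pc' i b a ib ab aj (h2' bj)).
  apply: IH => //; lia.
- by rewrite -ab in h2 h2'; rewrite h2 ?h2' //; lia.
Qed.

Fixpoint depf col (f i : nat) : nat :=
  if f is f'.+1 then (if par col i < j then depf col f' (par col i) else 0).+1
  else 0.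

Definition dep col i := depf col (j - i) i.

Lemma depf_stable col f f' i : i < j -> j - i <= f -> j - i <= f' ->
  depf col f i = depf col f' i.
Proof.
elim: f f' i => [|f IH] [|f'] i ij h h' //=; try lia.
have [h1 _ _] := par_props col ij.
case: ifP => // pj; congr S; apply: IH => //; lia.
Qed.

Lemma dep_eq col i : i < j ->
  dep col i = (if par col i < j then dep col (par col i) else 0).+1.
Proof.
move=> ij; rewrite /dep; have -> : j - i = (j - i).-1.+1 by lia.
rewrite /=; case: ifP => // pj; congr S; apply: depf_stable => //.
have [h1 _ _] := par_props col ij; lia.
Qed.

Lemma dep_lt col : P_ok col -> forall i a, i < a -> a < j -> col i a = false ->
  dep col a < dep col i.
Proof.
move=> Pc i a; move: {2}(a - i) (leqnn (a - i)) => k.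
elim: k i a => [|k IH] i a hk ia aj cf; first by lia.
have ij : i < j by lia.
have [h1 h2 h3] := par_props col ij.
set b := par col i in h1 h2 h3.
have ba : b <= a.
  rewrite leqNgt; apply/negP => ab; by rewrite h3 ?ia in cf.
have bj : b < j by lia.
rewrite (dep_eq col ij) -/b bj ltnS.
case: (ltngtP b a) ba => // ba _; last by rewrite ba.
have ib : i < b by lia.
apply/ltnW; apply: (IH b a); try lia.
by rewrite -(Pc i b a ib ba aj (h2 bj)).
Qed.

Definition mono (col : nat -> nat -> bool) (c : bool) (I : {set 'I_j}) :=
  forall p q : 'I_j, p \in I -> q \in I -> p < q -> col p q = c.

Lemma dep_chain col : P_ok col -> forall i, i < j ->
  exists I : {set 'I_j}, [/\ #|I| = dep col i, (forall c : 'I_j, c \in I -> i <= c),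
     (forall c : 'I_j, c \in I -> i < c -> col i c = false) & mono col false I].
Proof.
move=> Pc i; move: {2}(j - i) (leqnn (j - i)) => k.
elim: k i => [|k IH] i hk ij; first by lia.
have [h1 h2 h3] := par_props col ij.
set b := par col i in h1 h2 h3.
rewrite (dep_eq col ij) -/b.
case: ifP => bj.
- have [I [cI gI fI mI]] := IH b (ltac:(lia)) bj.
  exists (Ordinal ij |: I); split.
  + rewrite cardsU1 cI; case: (boolP (Ordinal ij \in I)) => // /gI /=; lia.
  + move=> c; rewrite !inE => /orP [/eqP -> //|/gI]; lia.
  + move=> c; rewrite !inE => /orP [/eqP -> /=|cIb ic]; first by rewrite ltnn.
    have := gI c cIb; rewrite leq_eqVlt => /orP [/eqP <-|bc]; first by apply: h2.
    have ib : i < b by lia.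
    by rewrite (Pc i b c ib bc (ltn_ord c) (h2 bj)) fI.
  + move=> p q; rewrite !inE => /orP [/eqP ->|pI] /orP [/eqP ->|qI] /=;
      try by rewrite ltnn.
    * move=> iq; have := gI q qI; rewrite leq_eqVlt => /orP [/eqP <-|bq].
        by apply: h2.
      have ib : i < b by lia.
      by rewrite (Pc i b q ib bq (ltn_ord q) (h2 bj)) fI.
    * move=> pi; have := gI p pI; lia.
    * by apply: mI.
- exists [set Ordinal ij]; split.
  + by rewrite cards1.
  + by move=> c; rewrite !inE => /eqP ->.
  + by move=> c; rewrite !inE => /eqP -> /=; rewrite ltnn.
  + by move=> p q; rewrite !inE => /eqP -> /eqP ->; rewrite ltnn.
Qed.

Lemma level_mono col t : P_ok col -> mono col true [set i : 'I_j | dep col i == t].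
Proof.
move=> Pc p q; rewrite !inE => /eqP hp /eqP hq pq.
case cpq: (col p q) => //.
have := dep_lt Pc pq (ltn_ord q) cpq; lia.
Qed.

Lemma j_bound col m : P_ok col ->
  (forall c I, mono col c I -> #|I| < m) -> j <= m * m.
Proof.
move=> Pc NM.
have dm : forall i : 'I_j, dep col i < m.
  move=> i; have [I [cI _ _ mI]] := dep_chain Pc (ltn_ord i).
  by rewrite -cI; apply: (NM false).
have -> : j = \sum_(i : 'I_j) 1 by rewrite sum1_card card_ord.
rewrite (partition_big (fun i : 'I_j => Ordinal (dm i)) xpredT) //=.
apply: (@leq_trans (\sum_(t < m) m)); last by rewrite sum_nat_const card_ord.
apply: leq_sum => t _.
rewrite sum1_card.
have : #|[set i : 'I_j | dep col i == t]| < m by apply: (NM true); apply: level_mono.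
apply: leq_trans; apply: ltnW; rewrite ltnS; apply: subset_leq_card.
apply/subsetP => i; rewrite !inE /= => /eqP <-. by [].
Qed.
End Col.


Lemma wlog3 (P : nat -> nat -> nat -> Prop) :
  (forall p q r, P p q r -> P q p r) -> (forall p q r, P p q r -> P p r q) ->
  (forall p q r, p < q -> q < r -> P p q r) ->
  forall p q r, p != q -> q != r -> p != r -> P p q r.
Proof.
move=> s12 s23 base.
have all6 : forall p q r, p < q -> q < r ->
   P p q r /\ P q p r /\ P p r q /\ P q r p /\ P r p q /\ P r q p.
  move=> p q r pq qr; have h := base p q r pq qr.
  have h1 := s12 _ _ _ h; have h2 := s23 _ _ _ h.
  have h3 := s23 _ _ _ h1; have h4 := s12 _ _ _ h2; have h5 := s23 _ _ _ h4.
  by do !split.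
move=> p q r pq qr pr.
case: (ltngtP p q) pq => // pq _; case: (ltngtP q r) qr => // qr _;
  case: (ltngtP p r) pr => // pr _; try lia.
- by case: (all6 p q r pq qr) => [? [? [? [? [? ?]]]]].
- by case: (all6 p r q pr qr) => [? [? [? [? [? ?]]]]].
- by case: (all6 r p q pr pq) => [? [? [? [? [? ?]]]]].
- by case: (all6 q p r pq pr) => [? [? [? [? [? ?]]]]].
- by case: (all6 q r p qr pr) => [? [? [? [? [? ?]]]]].
- by case: (all6 r q p qr pq) => [? [? [? [? [? ?]]]]].
Qed.

Section Hyp.
Variable n : nat.
Variable E : {set {set 'I_n}}.
Hypothesis unif : uniform_hypergraph 3 E.
Hypothesis free : mf_free 4 1 E.

Definition e3 (a b c : 'I_n) := [set a; b; c] \in E.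

Lemma e3C12 a b c : e3 a b c = e3 b a c.
Proof.
rewrite /e3; congr (_ \in E); apply/setP => y; rewrite !inE.
by case: (y == a); case: (y == b); case: (y == c).
Qed.

Lemma e3C23 a b c : e3 a b c = e3 a c b.
Proof.
rewrite /e3; congr (_ \in E); apply/setP => y; rewrite !inE.
by case: (y == a); case: (y == b); case: (y == c).
Qed.

Lemma card3 (a b c : 'I_n) : a != b -> b != c -> a != c -> #|[set a; b; c]| = 3.
Proof.
move=> ab bc ac.
rewrite -setUA cardsU1 cards2 bc !inE negb_or ab ac.
by [].
Qed.

Lemma sub3 (e : {set 'I_n}) a b c :
  a != b -> b != c -> a != c -> #|e| = 3 ->
  (forall y, y \in e -> (y == a) || (y == b) || (y == c)) -> e = [set a; b; c].
Proof.
move=> ab bc ac ce he.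
apply/setP/subset_cardP; first by rewrite ce card3.
by apply/subsetP => y /he; rewrite !inE.
Qed.

Lemma four a b c d : a != b -> a != c -> a != d -> b != c -> b != d -> c != d ->
  e3 a b c = false -> e3 a b d = false -> e3 a c d = e3 b c d.
Proof.
move=> ab ac ad bc bd cd h1 h2.
apply/eqP; apply/negP => neq.
set S4 := [set a; b; c; d].
have cS : #|S4| = 4.
  rewrite /S4 -!setUA cardsU1 cardsU1 cards2 cd !inE !negb_or ab ac ad bc bd.
  by [].
have key : forall e, e \in E -> e \subset S4 ->
    [\/ e = [set a; b; c], e = [set a; b; d], e = [set a; c; d] | e = [set b; c; d]].
  move=> e eE /subsetP sub; have ce := unif eE.
  have : ~~ (S4 \subset e).
    apply/negP => /subset_leq_card; rewrite cS ce; by [].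
  case/subsetPn => w wS we.
  have yw : forall y, y \in e -> y != w.
    by move=> y ye; apply/eqP => eq; rewrite -eq ye in we.
  have fin : forall y, y \in e -> ((y == a) || (y == b) || (y == c) || (y == d)) && (y != w).
    by move=> y ye; rewrite yw // andbT; move: (sub y ye); rewrite !inE.
  move: wS; rewrite !inE => /orP [/orP [/orP [/eqP wa|/eqP wb]|/eqP wc]|/eqP wd];
    subst w.
  - apply: Or44; apply: sub3 => // y /fin.
    by case: (y == a); case: (y == b); case: (y == c); case: (y == d).
  - apply: Or43; apply: sub3 => // y /fin.
    by case: (y == a); case: (y == b); case: (y == c); case: (y == d).
  - apply: Or42; apply: sub3 => // y /fin.
    by case: (y == a); case: (y == b); case: (y == c); case: (y == d).
  - apply: Or41; apply: sub3 => // y /fin.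
    by case: (y == a); case: (y == b); case: (y == c); case: (y == d).
have uniq1 : forall T, T \in E -> T \subset S4 ->
   e3 a c d != e3 b c d ->
   T = (if e3 a c d then [set a; c; d] else [set b; c; d]) ->
   [set e in E | e \subset S4] = [set T].
  move=> T TE TS _ hT; apply/setP => e; rewrite !inE.
  apply/idP/idP; last by move/eqP ->; rewrite TE TS.
  case/andP => eE eS; case: (key e eE eS) => ee; rewrite ee in eE; rewrite ee hT.
  - by rewrite /e3 eE in h1.
  - by rewrite /e3 eE in h2.
  - by move: neq; rewrite /e3 eE; case: ([set b; c; d] \in E).
  - by move: neq; rewrite /e3 eE; case: ([set a; c; d] \in E).
apply: (free cS); rewrite /induced_edges.
set T := (if e3 a c d then [set a; c; d] else [set b; c; d]).
have TE : T \in E.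
  by rewrite /T; move: neq; rewrite /e3; case: ifP => // _; case: ([set b; c; d] \in E).
have TS : T \subset S4.
  by rewrite /T /S4; case: ifP => _; apply/subsetP => y; rewrite !inE;
    case: (y == a); case: (y == b); case: (y == c); case: (y == d).
rewrite (uniq1 T) //; [apply: cards1 | exact/negP].
Qed.


Definition next (S : {set 'I_n}) (vs : seq 'I_n) v x :=
  [set z in S | (z != v) && all (fun u => e3 u v z == e3 u v x) vs].

Fixpoint run (f : nat) (S : {set 'I_n}) (vs : seq 'I_n) (x : 'I_n) : seq 'I_n :=
  if f is f'.+1 then
    (if [pick z in S] is Some v then
       (if v == x then vs else run f' (next S vs v x) (rcons vs v) x)
     else vs)
  else vs.

Lemma run_prefix f (S : {set 'I_n}) (vs : seq 'I_n) (x : 'I_n) : exists t, run f S vs x = vs ++ t.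
Proof.
elim: f S vs => [|f IH] S vs /=; first by exists [::]; rewrite cats0.
case: pickP => [v _|_]; last by exists [::]; rewrite cats0.
case: eqP => _; first by exists [::]; rewrite cats0.
have [t ->] := IH (next S vs v x) (rcons vs v).
by exists (v :: t); rewrite cat_rcons.
Qed.

Lemma nth_pref (W vs : seq 'I_n) v d t i : W = rcons vs v ++ t -> i <= size vs ->
  nth d W i = if i < size vs then nth d vs i else v.
Proof.
move=> -> iv; rewrite nth_cat size_rcons ltnS iv nth_rcons.
by case: ltngtP iv => // -> _; rewrite eqxx.
Qed.



Lemma next_card (S : {set 'I_n}) (vs : seq 'I_n) (v x : 'I_n) : v \in S -> #|next S vs v x| < #|S|.
Proof.
move=> vS; apply: proper_card; rewrite properE.
apply/andP; split; first by apply/subsetP => z; rewrite inE => /andP [].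
apply/subsetPn; exists v => //; rewrite inE eqxx andbF //.
Qed.

Lemma run_det f (S : {set 'I_n}) (vs : seq 'I_n) (x y : 'I_n) : x \in S -> y \in S -> #|S| <= f ->
  size (run f S vs x) = size (run f S vs y) ->
  (forall i a, i < a -> a < size (run f S vs x) ->
     e3 (nth x (run f S vs x) i) (nth x (run f S vs x) a) x =
     e3 (nth y (run f S vs y) i) (nth y (run f S vs y) a) y) -> x = y.
Proof.
elim: f S vs => [|f IH] S vs xS yS cS.
  have : 0 < #|S| by apply/card_gt0P; exists x.
  lia.
rewrite /=; case: pickP => [v vS|none]; last by rewrite none in xS.
case: (eqVneq v x) => [vx|nvx]; case: (eqVneq v y) => [vy|nvy].
- by rewrite -vx -vy.
- move=> hs _; have [t ht] := run_prefix f (next S vs v y) (rcons vs v) y.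
  by move: hs; rewrite ht size_cat size_rcons; lia.
- move=> hs _; have [t ht] := run_prefix f (next S vs v x) (rcons vs v) x.
  by move: hs; rewrite ht size_cat size_rcons; lia.
have [tx hx] := run_prefix f (next S vs v x) (rcons vs v) x.
have [ty hy] := run_prefix f (next S vs v y) (rcons vs v) y.
move=> hs hc.
have H : forall u, u \in vs -> e3 u v x = e3 u v y.
  move=> u uvs; have iu : index u vs < size vs by rewrite index_mem.
  have sv : size vs < size (run f (next S vs v x) (rcons vs v) x).
    by rewrite hx size_cat size_rcons; lia.
  have := hc _ _ iu sv.
  rewrite (nth_pref x hx) ?(ltnW iu) // (nth_pref x hx) // (nth_pref y hy) ?(ltnW iu) // (nth_pref y hy) //.
  by rewrite iu ltnn !nth_index.
have eqn : next S vs v x = next S vs v y.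
  apply/setP => z; rewrite !inE; congr (_ && (_ && _)).
  by apply: eq_in_all => u uvs /=; rewrite H.
move: hs hc; rewrite eqn => hs hc.
apply: (IH _ _ _ _ _ hs hc).
- by rewrite -eqn !inE xS eq_sym nvx /=; apply/allP => u _.
- by rewrite !inE yS eq_sym nvy /=; apply/allP => u _.
- have := next_card vs y vS; lia.
Qed.

Definition inv (S : {set 'I_n}) (vs : seq 'I_n) (x : 'I_n) := [/\ x \in S, uniq vs, (forall u, u \in vs -> u \notin S),
 (forall i a z, i < a -> a < size vs -> z \in S ->
    e3 (nth x vs i) (nth x vs a) z = e3 (nth x vs i) (nth x vs a) x)
 & (forall i a b, i < a -> a < b -> b < size vs ->
    e3 (nth x vs i) (nth x vs a) (nth x vs b) = e3 (nth x vs i) (nth x vs a) x)].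

Lemma run_inv f (S : {set 'I_n}) (vs : seq 'I_n) (x : 'I_n) : inv S vs x -> exists S', inv S' (run f S vs x) x.
Proof.
elim: f S vs => [|f IH] S vs hi /=; first by exists S.
case: pickP => [v vS|_]; last by exists S.
case: eqP => [_|vx]; first by exists S.
apply: IH.
case: hi => xS uv dis pair trip.
have vnv : v \notin vs by apply/negP => /dis; rewrite vS.
have nthr : forall i, i < size vs -> nth x (rcons vs v) i = nth x vs i.
  by move=> i iv; rewrite nth_rcons iv.
have nthv : nth x (rcons vs v) (size vs) = v by rewrite nth_rcons ltnn eqxx.
split.
- rewrite !inE xS /=; apply/andP; split; first by apply/eqP => h; apply: vx; rewrite h.
  by apply/allP => u _.
- by rewrite rcons_uniq vnv uv.
- move=> u; rewrite mem_rcons inE => /orP [/eqP ->|/dis uS].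
    by rewrite !inE eqxx /= andbF.
  by rewrite !inE (negbTE uS).
- move=> i a z ia; rewrite size_rcons ltnS leq_eqVlt => /orP [/eqP ea|av].
    subst a; rewrite nthv nthr; last by lia.
    rewrite !inE => /andP [_ /andP [_ /allP al]].
    by apply/eqP; apply: al; apply: mem_nth.
  rewrite !nthr //; last by lia.
  by rewrite !inE => /andP [zS _]; apply: pair.
- move=> i a b ia ab; rewrite size_rcons ltnS leq_eqVlt => /orP [/eqP eb|bv].
    subst b; rewrite nthv !nthr; try lia. by apply: pair => //; lia.
  by rewrite !nthr //; try lia; apply: trip.
Qed.

End Hyp.

Section Count.
Variable n m : nat.
Variable E : {set {set 'I_n}}.
Hypothesis unif : uniform_hypergraph 3 E.
Hypothesis free : mf_free 4 1 E.
Hypothesis homb : forall A, is_homogeneous 3 E A -> #|A| <= m.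

Definition W x := run E n setT [::] x.
Definition jx x := size (W x).
Definition u x i := nth x (W x) i.
Definition col x i a := e3 E (u x i) (u x a) x.

Lemma Wprops x : uniq (rcons (W x) x) /\
  (forall i a b, i < a -> a < b -> b <= jx x -> e3 E (u x i) (u x a) (u x b) = col x i a).
Proof.
have [S' [xS uW dis _ trip]] : exists S', inv E S' (W x) x.
  apply: run_inv; split => //; by rewrite inE.
split.
  rewrite rcons_uniq uW andbT; apply/negP => /dis; by rewrite xS.
move=> i a b ia ab; rewrite leq_eqVlt => /orP [/eqP ->|bj]; last by apply: trip.
by rewrite /col /u (nth_default x (leqnn _)).
Qed.

Lemma u_rcons x i : nth x (rcons (W x) x) i = u x i.
Proof.
rewrite /u nth_rcons; case: ltngtP => // h; last by rewrite h (nth_default x (leqnn _)).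
by rewrite (nth_default x (ltnW h)).
Qed.

Lemma u_neq x p q : p < q -> q <= jx x -> u x p != u x q.
Proof.
move=> pq qj; have [uq _] := Wprops x.
rewrite -!u_rcons nth_uniq ?size_rcons //; rewrite -/(jx x); lia.
Qed.

Lemma u_j x : u x (jx x) = x.
Proof. by rewrite /u (nth_default x (leqnn _)). Qed.

Lemma Pok x : P_ok (jx x) (col x).
Proof.
move=> i a b ia ab bj cf.
have [_ tr] := Wprops x.
have hh := four unif free (@u_neq x _ _ ia (ltac:(lia))) (@u_neq x _ _ (ltac:(lia) : i < b) (ltac:(lia)))
  (@u_neq x _ _ (ltac:(lia) : i < jx x) (leqnn _)) (@u_neq x _ _ ab (ltac:(lia)))
  (@u_neq x _ _ (ltac:(lia) : a < jx x) (leqnn _)) (@u_neq x _ _ bj (leqnn _)).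
rewrite u_j in hh.
apply: hh; first by rewrite tr //; lia.
exact: cf.
Qed.

Lemma homog_card x c (I : {set 'I_(jx x)}) : mono (col x) c I -> #|I| < m.
Proof.
move=> mI.
set A := x |: [set u x (val i) | i in I].
have inj : injective (fun i : 'I_(jx x) => u x (val i)).
  move=> i1 i2 /= h; apply: val_inj => /=.
  case: (ltngtP i1 i2) => // hi.
    by move: (@u_neq x _ _ hi (ltnW (ltn_ord i2))); rewrite h eqxx.
  by move: (@u_neq x _ _ hi (ltnW (ltn_ord i1))); rewrite h eqxx.
have cA : #|A| = #|I|.+1.
  rewrite cardsU1 card_imset //.
  case: (boolP (x \in _)) => //; case/imsetP => i _ hi.
  by move: (@u_neq x _ _ (ltn_ord i) (leqnn _)); rewrite u_j -hi eqxx.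
have key : forall e : {set 'I_n}, e \subset A -> #|e| = 3 -> (e \in E) = c.
  move=> e /subsetP eA ce.
  have : 2 < #|e| by rewrite ce.
  case/card_gt2P => [y1 [y2 [y3 [[h1 h2 h3] [d12 d23 d31]]]]].
  have ee : e = [set y1; y2; y3].
    apply/esym/setP/subset_cardP; first by rewrite ce card3 // eq_sym.
    by apply/subsetP => y; rewrite !inE => /orP [/orP [/eqP ->|/eqP ->]|/eqP ->].
  pose Jp p := (p == jx x) || [exists i in I, val i == p].
  have memA : forall y, y \in A -> exists p, Jp p /\ y = u x p.
    move=> y; rewrite !inE => /orP [/eqP ->|/imsetP [i iI ->]].
      by exists (jx x); rewrite u_j /Jp eqxx.
    exists (val i); split => //; apply/orP; right; apply/existsP; exists i; by rewrite iI eqxx.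
  have Jle : forall p, Jp p -> p <= jx x.
    by move=> p /orP [/eqP ->|/existsP [i /andP [_ /eqP <-]]] //; case: i => [k hk] /=; apply: ltnW; exact: hk.
  have [p1 [J1 e1]] := memA y1 (eA _ h1).
  have [p2 [J2 e2]] := memA y2 (eA _ h2).
  have [p3 [J3 e3']] := memA y3 (eA _ h3).
  have dp : forall p0 q0, u x p0 != u x q0 -> p0 != q0.
    by move=> p0 q0; apply: contra => /eqP ->.
  rewrite ee -/(e3 E y1 y2 y3) e1 e2 e3'.
  rewrite e1 e2 in d12; rewrite e2 e3' in d23; rewrite e3' e1 in d31.
  have := @wlog3 (fun p q r => Jp p -> Jp q -> Jp r -> e3 E (u x p) (u x q) (u x r) = c).
  apply => //.
  - by move=> p q r h Jq Jp' Jr; rewrite e3C12; apply: h.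
  - by move=> p q r h Jp' Jr Jq; rewrite e3C23; apply: h.
  - move=> p q r pq qr Jp' Jq Jr.
    have rj := Jle r Jr.
    have [_ tr] := Wprops x.
    rewrite tr //.
    have getI : forall s, s < jx x -> Jp s -> exists2 i : 'I_(jx x), i \in I & val i = s.
      move=> s sj /orP [/eqP h|/existsP [i /andP [iI /eqP <-]]]; first by rewrite h ltnn in sj.
      by exists i.
    have qj : q < jx x := leq_trans qr rj.
    have pj : p < jx x := ltn_trans pq qj.
    have [iq iqI eq] := getI q qj Jq.
    have [ip ipI ep] := getI p pj Jp'.
    rewrite -ep -eq; apply: mI => //; by rewrite ep eq.
  - exact: dp.
  - exact: dp.
  - by rewrite eq_sym; exact: dp.
have hA : is_homogeneous 3 E A.
  case: c mI key => mI key; [left|right] => e eA ce; rewrite key //.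
have := homb hA; rewrite cA; by [].
Qed.

Lemma jx_bound x : jx x <= m * m.
Proof. apply: (j_bound (@Pok x)) => c I; exact: homog_card. Qed.

Definition code x : 'I_(m * m).+1 * {ffun 'I_(m * m) -> 'I_(m * m).+1} :=
  (inord (jx x), [ffun i : 'I_(m * m) => inord (par (jx x) (col x) i)]).

Lemma code_inj : injective code.
Proof.
move=> x y [hj hf].
have bx := jx_bound x; have by_ := jx_bound y.
have ej : jx x = jx y.
  by move: hj; move/(congr1 (@nat_of_ord _)); rewrite !inordK //; lia.
have ep : forall i, i < jx x -> par (jx x) (col x) i = par (jx y) (col y) i.
  move=> i ij.
  have iK : i < m * m by lia.
  have := congr1 (fun f : {ffun 'I_(m * m) -> 'I_(m * m).+1} => nat_of_ord (f (Ordinal iK))) hf; rewrite !ffunE /=.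
  have [p1 _ _] := par_props (col x) ij.
  have ij' : i < jx y by lia.
  have [p2 _ _] := par_props (col y) ij'.
  by rewrite !inordK //; lia.
have ec : forall i a, i < a -> a < jx x -> col x i a = col y i a.
  apply: (par_inj (@Pok x)); first by rewrite ej; apply: (@Pok y).
  by move=> i ij; rewrite ep // ej.
apply: (@run_det n E n setT [::] x y).
- by rewrite inE.
- by rewrite inE.
- by rewrite cardsT card_ord.
- exact: ej.
- move=> i a ia aj; exact: (ec i a ia aj).
Qed.

Lemma count_bound : n <= expn (m * m).+1 (m * m).+1.
Proof.
have := @leq_card _ _ code code_inj.
rewrite card_ord card_prod card_ffun !card_ord; by rewrite expnS.
Qed.

End Count.

From Stdlib Require Import Lra Psatz ZArith Classical.
Open Scope R_scope.

Lemma ln_le' a b : 0 < a -> a <= b -> ln a <= ln b.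
Proof.
move=> ha hab; case: (Rle_lt_or_eq_dec _ _ hab) => h.
- by apply: Rlt_le; apply: ln_increasing.
- by rewrite h; apply: Rle_refl.
Qed.

Lemma expn_pow (a b : nat) : expn a b = Nat.pow a b.
Proof. elim: b => // b IH; by rewrite expnS IH. Qed.

Lemma ln_small L : 8 <= L -> ln L <= 2 * sqrt L.
Proof.
move=> hL.
have hs : 0 < sqrt L by apply: sqrt_lt_R0; lra.
have e : ln L = 2 * ln (sqrt L).
  by rewrite -{1}(sqrt_sqrt L) ?ln_mult //; lra.
have := exp_ineq1_le (ln (sqrt L)); rewrite exp_ln //; lra.
Qed.

Lemma real_contra (n K : nat) (L l : R) : (0 < n)%nat ->
  L = ln (INR n) -> l = ln L -> 8 <= L ->
  INR K <= (/4 * sqrt (L / l)) ^ 2 ->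
  INR n <= INR (K + 1) ^ (K + 1) -> False.
Proof.
move=> n0 hL hl L8 hK hn.
have l1 : 1 <= l.
  rewrite hl -(ln_exp 1); apply: ln_le'; first by apply: exp_pos.
  have := exp_le_3; lra.
have q0 : 0 <= L / l by apply: Rmult_le_pos; [lra | apply: Rlt_le; apply: Rinv_0_lt_compat; lra].
have hq : (/4 * sqrt (L / l)) ^ 2 = (L / l) / 16.
  rewrite /= Rmult_1_r.
  have := sqrt_sqrt _ q0; nra.
rewrite hq in hK.
set k := INR (K + 1).
have ek : k = INR K + 1 by rewrite /k plus_INR.
have k1 : 1 <= k by have := pos_INR K; lra.
have ql : L / l * l = L by field; lra.
have qL : L / l <= L by nra.
have kL : k <= L by lra.
have k0 : 0 < k by lra.
have lkl : ln k <= l by rewrite hl; apply: ln_le'.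
have lk0 : 0 <= ln k by rewrite -ln_1; apply: ln_le'; lra.
have hLk : L <= k * ln k.
  rewrite hL -ln_pow //; apply: ln_le'; last by rewrite /k; exact: hn.
  by apply: lt_0_INR; apply/ssrnat.ltP.
have h2 : k * ln k <= L / 16 + l.
  have : k * ln k <= k * l by apply: Rmult_le_compat_l; lra.
  nra.
have := ln_small L8; rewrite -hl => hls.
have r0 := sqrt_lt_R0 L (ltac:(lra)).
have rr := sqrt_sqrt L (ltac:(lra)).
nra.
Qed.

Theorem mainTheorem2 :
  exists c1 : R, 0 < c1 /\
  exists N : nat, forall n : nat, (N <= n)%nat ->
  forall E : {set {set 'I_n}},
    uniform_hypergraph 3 E -> mf_free 4 1 E ->
    exists A : {set 'I_n}, is_homogeneous 3 E A /\
      INR #|A| > c1 * sqrt (ln (INR n) / ln (ln (INR n))).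
Proof.
exists (/4); split; first lra.
exists 6561%nat => n hn E unif free.
set L := ln (INR n); set l := ln L; set x := /4 * sqrt (L / l).
apply: NNPP => hno.
have hall : forall A, is_homogeneous 3 E A -> INR #|A| <= x.
  move=> A hA; apply: Rnot_gt_le => h; apply: hno; by exists A.
have [a1 a2] := archimed x.
have x0 : 0 <= x by rewrite /x; have := sqrt_pos (L / l); lra.
set z := up x in a1 a2.
have z1 : (0 < z)%Z by apply: lt_IZR; lra.
set m := Z.to_nat (z - 1).
have hm : INR m = IZR z - 1.
  by rewrite INR_IZR_INZ /m Z2Nat.id ?minus_IZR //; lia.
have homb : forall A, is_homogeneous 3 E A -> (#|A| <= m)%nat.
  move=> A hA; have h := hall A hA.
  have : (Z.of_nat #|A| < z)%Z by apply: lt_IZR; rewrite -INR_IZR_INZ; lra.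
  move=> h'; apply/ssrnat.leP; rewrite /m; lia.
have cb := count_bound unif free homb.
have n0 : (0 < n)%nat by apply: leq_trans hn.
have L8 : 8 <= L.
  have e8 : INR 6561 = 3 ^ 8 by rewrite /= ; lra.
  have l3 : 1 <= ln 3.
    rewrite -(ln_exp 1); apply: ln_le'; first by apply: exp_pos.
    exact: exp_le_3.
  have : ln (3 ^ 8) <= L.
    rewrite -e8; apply: ln_le'; first by rewrite e8; lra.
    by apply: le_INR; apply/ssrnat.leP.
  rewrite ln_pow; last lra.
  rewrite /= in l3 *; lra.
apply: (@real_contra n (m * m)%nat L l n0 erefl erefl L8).
- rewrite mult_INR hm.
  have : IZR z - 1 <= x by lra.
  have : 0 <= IZR z - 1 by rewrite -hm; apply: pos_INR.
  rewrite /x /=; nra.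
- rewrite -pow_INR; apply: le_INR; apply/ssrnat.leP.
  by rewrite -expn_pow ssrnat.addn1.
Qed.
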